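(* Let $(X,d)$ be a complete CAT(0) space and let $(A,B)$ be a pair of nonempty, closed, convex, bounded subsets of $X$ which is proximal. Let $T:A\cup B\to A\cup B$ be a cyclic relatively nonexpansive mapping. Then $T$ is nonexpansive, i.e., $d(Tx,Ty)\le d(x,y)$ for all $x,y\in A\cup B$.
   Context: A CAT(0) space is a geodesic space in which every geodesic triangle satisfies $d(x,y)\le d_{\mathbb{E}^2}(\bar x,\bar y)$ for all points $x,y$ of the triangle and their comparison points in a Euclidean comparison triangle with the same side lengths. $\operatorname{dist}(A,B)=\inf\{d(x,y):x\in A,y\in B\}$. The pair $(A,B)$ is proximal if for every $(a,b)\in A\times B$ there is $(a',b')\in A\times B$ with $d(a,b')=d(a',b)=\operatorname{dist}(A,B)$. $T$ is relatively nonexpansive if $d(Tx,Ty)\le d(x,y)$ for all $x\in A$, $y\in B$, and cyclic if $T(A)\subseteq B$, $T(B)\subseteq A$. *)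

(* Defs.v *)
From Stdlib Require Import Reals Lra.
From Coquelicot Require Import Coquelicot.
Open Scope R_scope.

Section CAT0.
Variables (X : Type) (d : X -> X -> R).

Definition m_is_metric : Prop :=
  (forall x y, 0 <= d x y) /\
  (forall x y, d x y = 0 <-> x = y) /\
  (forall x y, d x y = d y x) /\
  (forall x y z, d x z <= d x y + d y z).

Definition m_geod_seg (g : R -> X) (l : R) : Prop :=
  0 <= l /\ forall s t, 0 <= s <= l -> 0 <= t <= l -> d (g s) (g t) = Rabs (s - t).

Definition m_geodesic_from_to (g : R -> X) (x y : X) : Prop :=
  m_geod_seg g (d x y) /\ g 0 = x /\ g (d x y) = y.

Definition m_geodesic_space : Prop :=
  forall x y, exists g, m_geodesic_from_to g x y.

Definition m_distE (P Q : R * R) : R :=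
  sqrt ((fst P - fst Q) ^ 2 + (snd P - snd Q) ^ 2).

Definition m_lerp (P Q : R * R) (u : R) : R * R :=
  (fst P + u * (fst Q - fst P), snd P + u * (snd Q - snd P)).

(* x = g s is a point of the side g (of length l), and xb is its comparison
   point on the comparison side [P,Q] *)
Definition m_side_point (g : R -> X) (l : R) (P Q : R * R) (x : X) (xb : R * R) : Prop :=
  exists s, 0 <= s <= l /\ x = g s /\ xb = m_lerp P Q (s / l).

Definition m_cat0_ineq : Prop :=
  forall (p q r : X) (g1 g2 g3 : R -> X) (P Q Rr : R * R),
    m_geodesic_from_to g1 p q -> m_geodesic_from_to g2 q r -> m_geodesic_from_to g3 r p ->
    m_distE P Q = d p q -> m_distE Q Rr = d q r -> m_distE Rr P = d r p ->
    forall x xb y yb,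
      (m_side_point g1 (d p q) P Q x xb \/ m_side_point g2 (d q r) Q Rr x xb \/
       m_side_point g3 (d r p) Rr P x xb) ->
      (m_side_point g1 (d p q) P Q y yb \/ m_side_point g2 (d q r) Q Rr y yb \/
       m_side_point g3 (d r p) Rr P y yb) ->
      d x y <= m_distE xb yb.

Definition m_cauchy_seq (u : nat -> X) : Prop :=
  forall eps, 0 < eps -> exists N, forall m n, (N <= m)%nat -> (N <= n)%nat -> d (u m) (u n) < eps.

Definition m_converges_to (u : nat -> X) (x : X) : Prop :=
  forall eps, 0 < eps -> exists N, forall n, (N <= n)%nat -> d (u n) x < eps.

Definition m_complete_space : Prop :=
  forall u, m_cauchy_seq u -> exists x, m_converges_to u x.

Definition complete_CAT0 : Prop :=
  m_is_metric /\ m_geodesic_space /\ m_cat0_ineq /\ m_complete_space.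

Definition m_nonempty (A : X -> Prop) : Prop := exists x, A x.

Definition m_closed_set (A : X -> Prop) : Prop :=
  forall u x, (forall n, A (u n)) -> m_converges_to u x -> A x.

Definition m_convex_set (A : X -> Prop) : Prop :=
  forall x y g, A x -> A y -> m_geodesic_from_to g x y ->
    forall t, 0 <= t <= d x y -> A (g t).

Definition m_bounded_set (A : X -> Prop) : Prop :=
  exists M, forall x y, A x -> A y -> d x y <= M.

Definition m_dist_sets (A B : X -> Prop) : Rbar :=
  Glb_Rbar (fun r => exists a b, A a /\ B b /\ r = d a b).

Definition proximal (A B : X -> Prop) : Prop :=
  forall a b, A a -> B b ->
    exists a' b', A a' /\ B b' /\
      Finite (d a b') = m_dist_sets A B /\ Finite (d a' b) = m_dist_sets A B.

Definition m_union_set (A B : X -> Prop) : X -> Prop := fun x => A x \/ B x.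

Definition cyclic_map (A B : X -> Prop) (T : X -> X) : Prop :=
  (forall x, A x -> B (T x)) /\ (forall x, B x -> A (T x)).

Definition rel_nonexpansive (A B : X -> Prop) (T : X -> X) : Prop :=
  forall x y, A x -> B y -> d (T x) (T y) <= d x y.

End CAT0.

Arguments m_is_metric {X}. Arguments m_geod_seg {X}. Arguments m_geodesic_from_to {X}.
Arguments m_geodesic_space {X}. Arguments m_side_point {X}. Arguments m_cat0_ineq {X}.
Arguments m_cauchy_seq {X}. Arguments m_converges_to {X}. Arguments m_complete_space {X}.
Arguments complete_CAT0 {X}. Arguments m_nonempty {X}. Arguments m_closed_set {X}.
Arguments m_convex_set {X}. Arguments m_bounded_set {X}. Arguments m_dist_sets {X}.
Arguments proximal {X}. Arguments m_union_set {X}. Arguments cyclic_map {X}.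
Arguments rel_nonexpansive {X}.

(* Main.v *)
Require Import Defs.
From Stdlib Require Import Reals Lra Psatz.
From Coquelicot Require Import Coquelicot.
Open Scope R_scope.

Lemma lim_lemma (X Y c : R) : (forall u, 0 < u < 1/2 -> X <= Y + u*c) -> X <= Y.
Proof.
  intros H. destruct (Rle_dec X Y) as [h|h]; [exact h|exfalso].
  apply Rnot_le_lt in h.
  destruct (Rle_dec c 0) as [hc|hc].
  - specialize (H (1/4) ltac:(lra)). nra.
  - apply Rnot_le_lt in hc.
    destruct (Rle_dec ((X-Y)/(2*c)) (1/4)) as [h2|h2].
    + assert (hp : 0 < (X-Y)/(2*c)) by (apply Rdiv_lt_0_compat; lra).
      specialize (H ((X-Y)/(2*c)) ltac:(lra)).
      assert ((X-Y)/(2*c)*c = (X-Y)/2) by (field; lra). lra.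
    + apply Rnot_le_lt in h2. specialize (H (1/4) ltac:(lra)).
      assert ((X-Y)/(2*c) * (2*c) = X - Y) by (field; lra). nra.
Qed.

Lemma euclid_exists (a b c : R) : 0<=a -> 0<=b -> 0<=c -> a <= b + c -> b <= a + c -> c <= a + b ->
  exists P Q Rr, m_distE P Q = a /\ m_distE Q Rr = b /\ m_distE Rr P = c.
Proof.
  intros ha hb hc t1 t2 t3.
  destruct (Req_dec a 0) as [a0|a0].
  - subst a. assert (b = c) by lra. subst c.
    exists (0,0), (0,0), (b,0). unfold m_distE; cbn [fst snd]. repeat split.
    + replace ((0-0)^2+(0-0)^2) with 0 by ring. apply sqrt_0.
    + replace ((0-b)^2+(0-0)^2) with (b^2) by ring. apply sqrt_pow2; lra.
    + replace ((b-0)^2+(0-0)^2) with (b^2) by ring. apply sqrt_pow2; lra.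
  - assert (ap : 0 < a) by lra.
    set (x0 := (a^2+c^2-b^2)/(2*a)).
    assert (hx : x0 * (2*a) = a^2+c^2-b^2) by (unfold x0; field; lra).
    assert (hn : 0 <= (2*a*c)^2 - (a^2+c^2-b^2)^2).
    { replace ((2*a*c)^2 - (a^2+c^2-b^2)^2) with ((b-a+c)*(b+a-c)*((a+c-b)*(a+c+b))) by ring.
      apply Rmult_le_pos; apply Rmult_le_pos; lra. }
    assert (hy : 0 <= c^2 - x0^2).
    { rewrite <- hx in hn.
      assert (h4 : 0 <= (4*a^2)*(c^2-x0^2)) by (replace ((4*a^2)*(c^2-x0^2)) with ((2 * a * c) ^ 2 - (x0 * (2 * a)) ^ 2) by ring; exact hn).
      assert (h5 : 0 < 4*a^2) by nra.
      apply (Rmult_le_reg_l (4*a^2)); lra. }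
    exists (0,0), (a,0), (x0, sqrt (c^2 - x0^2)). unfold m_distE; cbn [fst snd]. repeat split.
    + replace ((0-a)^2+(0-0)^2) with (a^2) by ring. apply sqrt_pow2; lra.
    + replace ((a - x0) ^ 2 + (0 - sqrt (c ^ 2 - x0 ^ 2)) ^ 2) with (b^2).
      apply sqrt_pow2; lra.
      replace ((0 - sqrt (c ^ 2 - x0 ^ 2)) ^ 2) with (sqrt (c ^ 2 - x0 ^ 2) ^ 2) by ring.
      rewrite pow2_sqrt by lra. nra.
    + replace ((x0 - 0) ^ 2 + (sqrt (c ^ 2 - x0 ^ 2) - 0) ^ 2) with (c^2).
      apply sqrt_pow2; lra.
      replace ((sqrt (c ^ 2 - x0 ^ 2) - 0) ^ 2) with (sqrt (c ^ 2 - x0 ^ 2) ^ 2) by ring.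
      rewrite pow2_sqrt by lra. ring.
Qed.

Lemma distE_sq P Q : m_distE P Q ^ 2 = (fst P - fst Q)^2 + (snd P - snd Q)^2.
Proof. unfold m_distE. apply pow2_sqrt. apply Rplus_le_le_0_compat; apply pow2_ge_0. Qed.

Lemma distE_nn P Q : 0 <= m_distE P Q.
Proof. unfold m_distE. apply sqrt_pos. Qed.

Lemma tri_comp (X : Type) (d : X -> X -> R) (Hm : m_is_metric d) p q r :
  exists P Q Rr, m_distE P Q = d p q /\ m_distE Q Rr = d q r /\ m_distE Rr P = d r p.
Proof.
  destruct Hm as (Hn & Hz & Hs & Ht).
  apply euclid_exists; auto.
  - pose proof (Ht p r q). rewrite (Hs p r), (Hs r q) in H. lra.
  - pose proof (Ht q p r). rewrite (Hs q p), (Hs p r) in H. lra.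
  - pose proof (Ht r q p). rewrite (Hs r q), (Hs q p) in H. lra.
Qed.

Lemma side_vertex (X : Type) (g : R -> X) l Rr P r : g 0 = r -> 0 <= l ->
  m_side_point g l Rr P r Rr.
Proof.
  intros H0 hl. exists 0. split; [lra|]. split; [auto|].
  unfold m_lerp. destruct Rr as [r1 r2]; cbn [fst snd].
  unfold Rdiv. rewrite Rmult_0_l. f_equal; ring.
Qed.

Lemma side_frac (X : Type) (g : R -> X) l P Q u : 0 <= u <= 1 -> 0 <= l -> l <> 0 ->
  m_side_point g l P Q (g (u*l)) (m_lerp P Q u).
Proof.
  intros hu hl hl0. exists (u*l). split; [nra|]. split; [auto|].
  f_equal. field. auto.
Qed.

Lemma cmpC2 (X : Type) (d : X -> X -> R) (Hm : m_is_metric d) (Hc : m_cat0_ineq d)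
  p q r g1 g2 g3 (H1 : m_geodesic_from_to d g1 p q) (H2 : m_geodesic_from_to d g2 q r)
  (H3 : m_geodesic_from_to d g3 r p) u (hu : 0 <= u <= 1) :
  d r (g1 (u * d p q)) ^ 2 <= (1-u) * d r p ^ 2 + u * d q r ^ 2 - u*(1-u)*d p q ^ 2.
Proof.
  pose proof Hm as (Hn & Hz & Hs & Ht).
  destruct (Req_dec (d p q) 0) as [a0|a0].
  - rewrite a0. rewrite Rmult_0_r. destruct H1 as (_ & e0 & _). rewrite e0.
    apply Hz in a0. subst q. rewrite (Hs p r). nra.
  - destruct (tri_comp X d Hm p q r) as (P & Q & Rr & e1 & e2 & e3).
    assert (hle := Hc p q r g1 g2 g3 P Q Rr H1 H2 H3 e1 e2 e3 r Rr (g1 (u * d p q)) (m_lerp P Q u)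
      (or_intror (or_intror (side_vertex X g3 _ Rr P r (proj1 (proj2 H3)) (Hn r p))))
      (or_introl (side_frac X g1 _ P Q u hu (Hn p q) a0))).
    assert (hsq : d r (g1 (u * d p q)) ^ 2 <= m_distE Rr (m_lerp P Q u) ^ 2).
    { pose proof (Hn r (g1 (u * d p q))). nra. }
    rewrite distE_sq in hsq.
    assert (E1 : d p q ^ 2 = (fst P - fst Q)^2 + (snd P - snd Q)^2) by (rewrite <- e1; apply distE_sq).
    assert (E2 : d q r ^ 2 = (fst Q - fst Rr)^2 + (snd Q - snd Rr)^2) by (rewrite <- e2; apply distE_sq).
    assert (E3 : d r p ^ 2 = (fst Rr - fst P)^2 + (snd Rr - snd P)^2) by (rewrite <- e3; apply distE_sq).
    rewrite E1, E2, E3.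
    unfold m_lerp in hsq. cbn [fst snd] in hsq. eapply Rle_trans; [exact hsq|]. right. ring.
Qed.

Lemma cmpC1 (X : Type) (d : X -> X -> R) (Hm : m_is_metric d) (Hc : m_cat0_ineq d)
  p q r g1 g2 g3 (H1 : m_geodesic_from_to d g1 p q) (H2 : m_geodesic_from_to d g2 q r)
  (H3 : m_geodesic_from_to d g3 r p) u (hu : 0 <= u <= 1) :
  d (g1 (u * d p q)) (g3 ((1-u) * d r p)) <= u * d q r.
Proof.
  pose proof Hm as (Hn & Hz & Hs & Ht).
  destruct (Req_dec (d p q) 0) as [a0|a0].
  - rewrite a0. rewrite Rmult_0_r. destruct H1 as (_ & e0 & _). rewrite e0.
    apply Hz in a0. subst q.
    destruct H3 as ((hl & hg) & f0 & f1).
    rewrite <- f1 at 1. rewrite hg by nra. rewrite (Hs p r).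
    rewrite Rabs_right by nra. nra.
  - destruct (Req_dec (d r p) 0) as [c0|c0].
    + rewrite c0. rewrite Rmult_0_r. destruct H3 as (_ & f0 & _). rewrite f0.
      apply Hz in c0. rewrite c0.
      destruct H1 as ((hl & hg) & e0 & e1).
      rewrite <- e0 at 2. rewrite hg by nra. rewrite (Hs q p).
      rewrite Rabs_right by nra. nra.
    + destruct (tri_comp X d Hm p q r) as (P & Q & Rr & e1 & e2 & e3).
      assert (hs3 : m_side_point g3 (d r p) Rr P (g3 ((1-u) * d r p)) (m_lerp Rr P (1-u)))
        by (apply side_frac; auto; lra).
      assert (hle := Hc p q r g1 g2 g3 P Q Rr H1 H2 H3 e1 e2 e3 (g1 (u * d p q)) (m_lerp P Q u)
        (g3 ((1-u) * d r p)) (m_lerp Rr P (1-u))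
        (or_introl (side_frac X g1 _ P Q u hu (Hn p q) a0))
        (or_intror (or_intror hs3))).
      eapply Rle_trans; [exact hle|]. rewrite <- e2. right.
      unfold m_distE, m_lerp. cbn [fst snd].
      replace ((fst P + u * (fst Q - fst P) - (fst Rr + (1 - u) * (fst P - fst Rr))) ^ 2 +
               (snd P + u * (snd Q - snd P) - (snd Rr + (1 - u) * (snd P - snd Rr))) ^ 2)
        with (u^2 * ((fst Q - fst Rr) ^ 2 + (snd Q - snd Rr) ^ 2)) by ring.
      rewrite sqrt_mult_alt by nra. rewrite sqrt_pow2 by lra. reflexivity.
Qed.

Lemma pos_mul_le0 u z : 0 < u -> u * z <= 0 -> z <= 0.
Proof. intros; nra. Qed.

Lemma Lo (X : Type) (d : X -> X -> R) (Hm : m_is_metric d) (Hc : m_cat0_ineq d)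
  (Hg : m_geodesic_space d) (S : X -> Prop) (Sconv : m_convex_set d S) (D : R) p q q'
  (Hsep : forall s, S s -> D <= d q' s) (Hp : S p) (Hq : S q) (HD : d q q' = D) :
  d p q ^ 2 + D ^ 2 <= d p q' ^ 2.
Proof.
  pose proof Hm as (Hn & Hz & Hs & Ht).
  destruct (Hg q p) as [g1 H1]. destruct (Hg p q') as [g2 H2]. destruct (Hg q' q) as [g3 H3].
  assert (D0 : 0 <= D) by (rewrite <- HD; apply Hn).
  rewrite (Hs p q).
  apply (lim_lemma _ _ (d q p ^ 2)). intros u hu.
  pose proof (cmpC2 X d Hm Hc q p q' g1 g2 g3 H1 H2 H3 u ltac:(lra)) as h.
  assert (hin : S (g1 (u * d q p))).
  { apply (Sconv q p g1 Hq Hp H1). pose proof (Hn q p). nra. }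
  pose proof (Hsep _ hin) as h2.
  rewrite (Hs q' q), HD in h.
  assert (h3 : D ^ 2 <= d q' (g1 (u * d q p)) ^ 2) by nra.
  set (L := d q p) in *. set (F := d p q') in *.
  assert (h4 : u * (D ^ 2 + L ^ 2 - F ^ 2 - u * L ^ 2) <= 0) by nra.
  apply pos_mul_le0 in h4; [|lra]. nra.
Qed.

Lemma Kl (X : Type) (d : X -> X -> R) (Hm : m_is_metric d) (Hc : m_cat0_ineq d)
  (Hg : m_geodesic_space d) (S S' : X -> Prop) (Sconv : m_convex_set d S') (D : R) x y x' y'
  (Hsep : forall s s', S s -> S' s' -> D <= d s s') (Hx : S x) (Hy : S y) (Hx' : S' x') (Hy' : S' y')
  (HDx : d x x' = D) (HDy : d y y' = D) :
  d y x' ^ 2 <= d x y ^ 2 + D ^ 2.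
Proof.
  pose proof Hm as (Hn & Hz & Hs & Ht).
  assert (D0 : 0 <= D) by (rewrite <- HDx; apply Hn).
  destruct (Hg x' y) as [g1 H1]. destruct (Hg y y') as [g2 H2]. destruct (Hg y' x') as [g3 H3].
  destruct (Hg y x) as [g2' H2']. destruct (Hg x x') as [g3' H3'].
  rewrite (Hs y x'), (Hs x y).
  apply (lim_lemma _ _ (d x' y ^ 2 - D ^ 2)). intros u hu.
  pose proof (cmpC1 X d Hm Hc x' y y' g1 g2 g3 H1 H2 H3 u ltac:(lra)) as h1.
  pose proof (cmpC2 X d Hm Hc x' y x g1 g2' g3' H1 H2' H3' u ltac:(lra)) as h2.
  rewrite HDy in h1. rewrite HDx in h2.
  assert (hin : S' (g3 ((1-u) * d y' x'))).
  { apply (Sconv y' x' g3 Hy' Hx' H3). pose proof (Hn y' x'). nra. }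
  pose proof (Hsep _ _ Hx hin) as hb.
  pose proof (Ht x (g1 (u * d x' y)) (g3 ((1 - u) * d y' x'))) as ht.
  assert (h5 : (1-u) * D <= d x (g1 (u * d x' y))) by lra.
  assert (h6 : ((1-u) * D) ^ 2 <= d x (g1 (u * d x' y)) ^ 2) by (apply pow_incr; split; [nra|exact h5]).
  set (E := d x' y) in *. set (L := d y x) in *.
  assert (h4 : u * ((1-u) * E ^ 2 - (1-u) * D ^ 2 - L ^ 2) <= 0) by nra.
  apply pos_mul_le0 in h4; [|lra]. nra.
Qed.

Theorem mainTheorem11 (X : Type) (d : X -> X -> R) (A B : X -> Prop) (T : X -> X) :
  complete_CAT0 d ->
  m_nonempty A -> m_nonempty B ->
  m_closed_set d A -> m_closed_set d B ->
  m_convex_set d A -> m_convex_set d B ->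
  m_bounded_set d A -> m_bounded_set d B ->
  proximal d A B ->
  (forall x, m_union_set A B x -> m_union_set A B (T x)) ->
  cyclic_map A B T ->
  rel_nonexpansive d A B T ->
  forall x y, m_union_set A B x -> m_union_set A B y -> d (T x) (T y) <= d x y.
Proof.
  intros [Hm [Hg [Hc _]]] [a0 Ha0] [b0 Hb0] _ _ HcA HcB _ _ Hprox _ [TAB TBA] Hne x y Hx Hy.
  pose proof Hm as (Hn & Hz & Hs & Ht).
  destruct (Hprox a0 b0 Ha0 Hb0) as (a1 & b1 & _ & Hb1 & e1 & _).
  set (D := d a0 b1).
  assert (HD : m_dist_sets d A B = Finite D) by (rewrite <- e1; reflexivity).
  assert (Hsep : forall a b, A a -> B b -> D <= d a b).
  { intros a b Ha Hb.
    pose proof (proj1 (Glb_Rbar_correct (fun r => exists a b, A a /\ B b /\ r = d a b)) (d a b)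
      (ex_intro _ a (ex_intro _ b (conj Ha (conj Hb eq_refl))))) as h.
    unfold m_dist_sets in HD. rewrite HD in h. exact h. }
  assert (PA : forall a, A a -> exists b, B b /\ d a b = D).
  { intros a Ha. destruct (Hprox a b0 Ha Hb0) as (_ & b & _ & Hb & e & _).
    exists b. split; auto. rewrite HD in e. injection e; auto. }
  assert (PB : forall b, B b -> exists a, A a /\ d a b = D).
  { intros b Hb. destruct (Hprox a0 b Ha0 Hb) as (a & _ & Ha & _ & _ & e).
    exists a. split; auto. rewrite HD in e. injection e; auto. }
  assert (Hsep' : forall b a, B b -> A a -> D <= d b a).
  { intros b a Hb Ha. rewrite Hs. auto. }
  assert (fin : forall a b, 0 <= a -> 0 <= b -> a ^ 2 <= b ^ 2 -> a <= b).
  { intros a b ha hb h. destruct (Rle_dec a b) as [h'|h']; auto. nra. }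
  destruct Hx as [Hx|Hx]; destruct Hy as [Hy|Hy].
  - destruct (PA y Hy) as (y' & Hy' & ey). destruct (PA x Hx) as (x' & Hx' & ex).
    assert (eT : d (T y) (T y') = D).
    { apply Rle_antisym. rewrite <- ey. apply Hne; auto. rewrite Hs. apply Hsep; auto. }
    pose proof (Lo X d Hm Hc Hg B HcB D (T x) (T y) (T y')
      (fun s Hs0 => Hsep _ _ (TBA _ Hy') Hs0) (TAB _ Hx) (TAB _ Hy) eT) as h1.
    pose proof (Hne x y' Hx Hy') as h2.
    pose proof (Kl X d Hm Hc Hg A B HcB D y x y' x' Hsep Hy Hx Hy' Hx' ey ex) as h3.
    rewrite (Hs y x) in h3.
    pose proof (Hn (T x) (T y')).
    apply fin; auto. nra.
  - apply Hne; auto.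
  - rewrite (Hs (T x)), (Hs x). apply Hne; auto.
  - destruct (PB y Hy) as (y' & Hy' & ey). destruct (PB x Hx) as (x' & Hx' & ex).
    rewrite Hs in ey. rewrite Hs in ex.
    assert (eT : d (T y) (T y') = D).
    { apply Rle_antisym. rewrite <- ey. rewrite Hs, (Hs y). apply Hne; auto. apply Hsep; auto. }
    pose proof (Lo X d Hm Hc Hg A HcA D (T x) (T y) (T y')
      (fun s Hs0 => Hsep' _ _ (TAB _ Hy') Hs0) (TBA _ Hx) (TBA _ Hy) eT) as h1.
    pose proof (Hne y' x Hy' Hx) as h2. rewrite (Hs (T y')), (Hs y') in h2.
    pose proof (Kl X d Hm Hc Hg B A HcA D y x y' x' Hsep' Hy Hx Hy' Hx' ey ex) as h3.
    rewrite (Hs y x) in h3.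
    pose proof (Hn (T x) (T y')).
    apply fin; auto. nra.
Qed.
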